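(* Let $k\ge1$ and let $f:\mathbb{N}^k\to\mathbb{N}$ be minimal. Let $B\subseteq\mathbb{N}$ satisfy $\bar d(B)=0$ and $\bar d(f[B^k])>0$. Then for each $i\ge0$ the set $B\setminus[0,i]$ also satisfies $\bar d(B\setminus[0,i])=0$ and $\bar d(f[(B\setminus[0,i])^k])>0$; in fact $\bar d(f[(B\setminus[0,i])^k])=\bar d(f[B^k])$.
   Context: $\mathbb{N}=\{0,1,2,\dots\}$. For $A\subseteq\mathbb{N}$, $\bar d(A)=\limsup_{n\to\infty}\frac{|A\cap[0,n)|}{n}$. $\mathscr{C}_{I_{\bar d=0}}$ is the set of all finitary functions $f:\mathbb{N}^k\to\mathbb{N}$ ($k\ge1$) such that $\bar d(f[A^k])=0$ whenever $\bar d(A)=0$. For $f:\mathbb{N}^k\to\mathbb{N}$, a permutation $\pi$ of $\{1,\dots,k\}$ and a tuple $\bar a=(a_1,\dots,a_\ell)\in\mathbb{N}^\ell$ with $0\le\ell<k$, the shadow $f_{\pi,\bar a}$ is the $(k-\ell)$-ary function $f_{\pi,\bar a}(y_1,\dots,y_{k-\ell})=f_\pi(a_1,\dots,a_\ell,y_1,\dots,y_{k-\ell})$, where $f_\pi(x_1,\dots,x_k)=f(x_{\pi(1)},\dots,x_{\pi(k)})$. The shadow is proper if $\ell>0$. $f$ is called minimal if $f\notin\mathscr{C}_{I_{\bar d=0}}$ and every proper shadow of $f$ lies in $\mathscr{C}_{I_{\bar d=0}}$. *)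

(* Defs.v *)
From HB Require Import structures.
From mathcomp Require Import all_boot all_order all_algebra all_fingroup.
From mathcomp Require Import all_classical all_reals all_analysis.
From mathcomp Require Import Rstruct.
Set Implicit Arguments. Unset Strict Implicit. Unset Printing Implicit Defensive.
Import Order.TTheory GRing.Theory Num.Theory.
Local Open Scope classical_set_scope.
Local Open Scope ring_scope.

Definition cnt (A : set nat) (n : nat) : nat :=
  (\sum_(0 <= i < n) (if `[< A i >] then 1 else 0))%N.

Definition udens (A : set nat) : \bar Rdefinitions.R :=
  limn_esup (fun n : nat => ((cnt A n)%:R / n%:R : Rdefinitions.R)%:E).

Definition img (k : nat) (f : ('I_k -> nat) -> nat) (A : set nat) : set nat :=
  [set m | exists x : 'I_k -> nat, (forall i, A (x i)) /\ f x = m].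

Definition inC (k : nat) (f : ('I_k -> nat) -> nat) : Prop :=
  forall A : set nat, udens A = 0%E -> udens (img f A) = 0%E.

(* extend a finite tuple to nat-indexed (value 0 outside range; never used) *)
Definition ext (n : nat) (v : 'I_n -> nat) (j : nat) : nat :=
  if insub j is Some i then v (i : 'I_n) else 0%N.

(* f_pi(x_1..x_k) = f(x_{pi 1},...,x_{pi k});
   shadow f_{pi,a}(y_1..y_{k-l}) = f_pi(a_1..a_l, y_1..y_{k-l}) *)
Definition shadow (k l : nat) (f : ('I_k -> nat) -> nat) (pi : 'S_k)
  (a : 'I_l -> nat) : ('I_(k - l) -> nat) -> nat :=
  fun y => f (fun i : 'I_k =>
    let j := nat_of_ord (pi i) in
    if (j < l)%N then ext a j else ext y (j - l)).

Definition minimal (k : nat) (f : ('I_k -> nat) -> nat) : Prop :=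
  ~ inC f /\
  forall (l : nat), (0 < l)%N -> (l < k)%N ->
    forall (pi : 'S_k) (a : 'I_l -> nat), inC (shadow f pi a).

Definition dropupto (B : set nat) (i : nat) : set nat := [set n | B n /\ (i < n)%N].

(* Main.v *)
Require Import Defs.
From HB Require Import structures.
From mathcomp Require Import all_boot all_order all_algebra all_fingroup.
From mathcomp Require Import all_classical all_reals all_analysis.
From mathcomp Require Import Rstruct zify.
Import Order.TTheory GRing.Theory Num.Theory.
Local Open Scope classical_set_scope.
Local Open Scope ring_scope.

Local Notation RR := Rdefinitions.R.

Lemma esups_le (u v : (\bar RR)^nat) : (forall n, (u n <= v n)%E) ->
  forall n, (esups u n <= esups v n)%E.
Proof.
move=> uv n; apply: ge_ereal_sup => _ [m /= nm <-].
apply: le_trans (uv m) _; apply: ereal_sup_ubound; by exists m.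
Qed.

Lemma limn_esup_le (u v : (\bar RR)^nat) : (forall n, (u n <= v n)%E) ->
  (limn_esup u <= limn_esup v)%E.
Proof.
move=> uv; rewrite !limn_esup_lim; apply: lee_lim; try exact: is_cvg_esups.
by apply: nearW => n; apply: esups_le.
Qed.

Lemma esups_ge0 (u : (\bar RR)^nat) : (forall n, (0 <= u n)%E) -> forall n, (0 <= esups u n)%E.
Proof.
move=> u0 n; apply: le_trans (u0 n) _; apply: ereal_sup_ubound; by exists n => /=.
Qed.

Lemma limn_esupD_le (u v : (\bar RR)^nat) : (forall n, (0 <= u n)%E) -> (forall n, (0 <= v n)%E) ->
  (limn_esup (fun n => u n + v n) <= limn_esup u + limn_esup v)%E.
Proof.
move=> u0 v0; rewrite !limn_esup_lim.
have cu := @is_cvg_esups _ u; have cv := @is_cvg_esups _ v.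
have lu : (0 <= limn (esups u))%E.
  by apply: lime_ge => //; apply: nearW => n; apply: esups_ge0.
have lv : (0 <= limn (esups v))%E.
  by apply: lime_ge => //; apply: nearW => n; apply: esups_ge0.
have ad : (limn (esups u) +? limn (esups v))%E by apply: ge0_adde_def; rewrite inE.
rewrite -limeD //; apply: lee_lim.
- exact: is_cvg_esups.
- by apply: is_cvgeD.
apply: nearW => n /=; apply: ge_ereal_sup => _ [m /= nm <-].
apply: leeD; apply: ereal_sup_ubound; by exists m.
Qed.

Lemma cnt_le (A C : set nat) n : A `<=` C -> (cnt A n <= cnt C n)%N.
Proof.
move=> AC; rewrite /cnt; apply: leq_sum => i _.
case: (asboolP (A i)) => // /AC Ci; by rewrite asboolT.
Qed.

Lemma cnt_U (A C : set nat) n : (cnt (A `|` C) n <= cnt A n + cnt C n)%N.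
Proof.
rewrite /cnt -big_split /=; apply: leq_sum => i _.
case: (asboolP ((A `|` C) i)) => //= -[Ai|Ci].
  by rewrite asboolT.
by rewrite (asboolT Ci) addn1.
Qed.

Lemma ratio_le (a b n : nat) : (a <= b)%N -> a%:R / n%:R <= b%:R / n%:R :> RR.
Proof. by move=> ab; apply: ler_wpM2r; [rewrite invr_ge0 ler0n | rewrite ler_nat]. Qed.

Lemma ratio_ge0 (a n : nat) : 0 <= a%:R / n%:R :> RR.
Proof. by apply: divr_ge0; rewrite ler0n. Qed.

Lemma udens_mono (A C : set nat) : A `<=` C -> (udens A <= udens C)%E.
Proof.
move=> AC; apply: limn_esup_le => n; rewrite lee_fin; apply: ratio_le; exact: cnt_le.
Qed.

Lemma udens_ge0 (A : set nat) : (0 <= udens A)%E.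
Proof.
rewrite /udens limn_esup_lim; apply: lime_ge; first exact: is_cvg_esups.
apply: nearW => n; apply: esups_ge0 => m; rewrite lee_fin; exact: ratio_ge0.
Qed.

Lemma udens_U (A C : set nat) : (udens (A `|` C) <= udens A + udens C)%E.
Proof.
rewrite /udens; apply: le_trans; last first.
  apply: limn_esupD_le => m; rewrite lee_fin; exact: ratio_ge0.
apply: limn_esup_le => n /=; rewrite -EFinD lee_fin -mulrDl -natrD.
apply: ratio_le; exact: cnt_U.
Qed.

Lemma udens_bounded (A : set nat) (c : nat) : (forall n, (cnt A n <= c)%N) -> udens A = 0%E.
Proof.
move=> Ac; apply/eqP; rewrite eq_le udens_ge0 andbT.
have h : forall n : nat, ((cnt A n)%:R / n%:R <= (2 * c)%:R * harmonic n :> RR).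
  move=> n; apply: le_trans (ratio_le _ _ n (Ac n)) _.
  case: n => [|m]; first by rewrite invr0 mulr0 mulr_ge0 ?ler0n //= invr_ge0 ler0n.
  rewrite /= natrM ler_pdivrMr ?ltr0n // mulrAC ler_pdivlMr ?ltr0n // -!natrM ler_nat; nia.

set v := (fun n : nat => (((2 * c)%:R : RR)%:E * (harmonic n : RR)%:E)%E).
have le1 : (udens A <= limn_esup v)%E.
  by apply: limn_esup_le => n; rewrite /v -EFinM lee_fin.
apply: le_trans le1 _.
have cv : v @ \oo --> (((2 * c)%:R : RR)%:E * 0%:E)%E.
  apply: cvgeZl => //; exact: cvge_harmonic.
by rewrite (cvg_limn_einf_sup cv).2 mule0.
Qed.

Lemma cnt1 (v n : nat) : cnt [set v] n = (v < n)%N.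
Proof.
elim: n => [|n IH]; first by rewrite /cnt big_geq.
rewrite /cnt big_nat_recr //= -/(cnt _ _) IH.
case: (asboolP (n = v)) => [->|nv]; first by rewrite ltnn ltnSn.
rewrite addn0 ltnS [in RHS]leq_eqVlt; case: eqP => // e; by exfalso; apply: nv; rewrite e.
Qed.

Lemma udens1 (v : nat) : udens [set v] = 0%E.
Proof. apply: (@udens_bounded _ 1) => n; rewrite cnt1; by case: (v < n)%N. Qed.

Lemma udens_finU (S : nat -> set nat) (N : nat) :
  (forall a, (a <= N)%N -> udens (S a) = 0%E) ->
  udens [set m | exists a, (a <= N)%N /\ S a m] = 0%E.
Proof.
elim: N => [|N IH] H.
  apply: le_anti; rewrite udens_ge0 andbT -(H 0%N) //; apply: udens_mono.
  by move=> m [a [a0 Sm]]; move: a0; rewrite leqn0 => /eqP <-.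
apply: le_anti; rewrite udens_ge0 andbT.
have sub : [set m | exists a, (a <= N.+1)%N /\ S a m] `<=`
    [set m | exists a, (a <= N)%N /\ S a m] `|` S N.+1.
  move=> m [a [aN Sm]]; rewrite leq_eqVlt in aN; case/orP: aN => [/eqP <-|aN].
    by right.
  by left; exists a.
apply: le_trans (udens_mono _ _ sub) _; apply: le_trans (udens_U _ _) _.
rewrite IH ?H ?adde0 // => a aN; apply: H; exact: leq_trans aN _.
Qed.

Lemma ext_ord (n : nat) (v : 'I_n -> nat) (i : 'I_n) : ext v i = v i.
Proof. by rewrite /ext valK. Qed.

Lemma ext_lt (n : nat) (v : 'I_n -> nat) (j : nat) (h : (j < n)%N) : ext v j = v (Ordinal h).
Proof. by rewrite /ext insubT. Qed.

Theorem mainTheorem4 (k : nat) (f : ('I_k -> nat) -> nat) (B : set nat) :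
  (1 <= k)%N -> minimal f ->
  udens B = 0%E -> (0 < udens (img f B))%E ->
  forall i : nat,
    udens (dropupto B i) = 0%E /\
    (0 < udens (img f (dropupto B i)))%E /\
    udens (img f (dropupto B i)) = udens (img f B).
Proof.
move=> k1 [_ fmin] B0 fpos i.
set B' := dropupto B i.
have B'B : B' `<=` B by move=> m [].
have B'0 : udens B' = 0%E.
  by apply: le_anti; rewrite udens_ge0 andbT -B0; apply: udens_mono.
have imgsub : img f B' `<=` img f B.
  by move=> m [x [xB <-]]; exists x; split => // t; apply: B'B.
have [Z [Z0 ZS]] : exists Z : set nat, udens Z = 0%E /\ img f B `<=` img f B' `|` Z.
  have split_img : forall x : 'I_k -> nat, (forall t, B (x t)) ->
      (img f B' (f x)) \/ exists t, (x t <= i)%N.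
    move=> x xB; case: (boolP [forall t, (i < x t)%N]) => [/forallP H|].
      by left; exists x; split => // t; split => //; apply: H.
    rewrite negb_forall => /existsP [t]; rewrite -leqNgt => H; right; by exists t.
  clear imgsub fpos; case: k f fmin k1 split_img => [//|[|k]] f fmin _ split_img.
    exists [set m | exists a, (a <= i)%N /\ [set f (fun _ => a)] m]; split.
      by apply: udens_finU => a _; apply: udens1.
    move=> m [x [xB <-]]; case: (split_img x xB) => [|[t xt]]; first by left.
    right; exists (x t); split => //=; congr f; apply: funext => u.
    by rewrite (ord1 u) (ord1 t).
  pose T (a j : nat) := img (shadow f (tperm ord0 (inord j)) (fun _ : 'I_1 => a)) B.
  exists [set m | exists a, (a <= i)%N /\ [set m | exists j, (j <= k.+1)%N /\ T a j m] m]; split.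
    apply: udens_finU => a _; apply: udens_finU => j _.
    by apply: (fmin 1%N) => //.
  move=> m [x [xB <-]]; case: (split_img x xB) => [|[t xt]]; first by left.
  right; exists (x t); split => //; exists (val t); split; first exact: (ltn_ord t).
  rewrite /T inord_val; set pi := tperm ord0 t.
  exists (fun q : 'I_(k.+2 - 1) => x (pi (inord q.+1))); split => [q|]; first exact: xB.
  rewrite /shadow; congr f; apply: funext => u /=.
  case: ltnP => hu.
    rewrite (ext_lt _ _ _ hu).
    have pu0 : pi u = ord0 by apply: val_inj => /=; move: hu; rewrite ltnS leqn0 => /eqP.
    by rewrite -[u](tpermK ord0 t) -/pi pu0 /pi tpermL.
  have hj : (pi u - 1 < k.+2 - 1)%N.
    have := ltn_ord (pi u). move: hu. set z := nat_of_ord (pi u). lia.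
  rewrite (ext_lt _ _ _ hj) /=.
  have -> : (pi u - 1).+1 = pi u by move: hu; set z := nat_of_ord (pi u); lia.
  by rewrite inord_val /pi tpermK.
have eq : udens (img f B') = udens (img f B).
  apply: le_anti; rewrite udens_mono //=.
  apply: le_trans (udens_mono _ _ ZS) _; apply: le_trans (udens_U _ _) _.
  by rewrite Z0 adde0.
by split => //; rewrite eq.
Qed.
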